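(* Let $c:\mathbb{R}^d\to[0,\infty)$ be a cost function, let $(\alpha_k)_{k\ge 1}$ be a sequence of real weights, and let $\lambda>0$. Consider the optimization problem $$\min_{K\ge 0}\ \min_{\bm{\beta}=(\beta_1,\dots,\beta_K)\in\mathcal{P}_K}\Big(c(\beta_K)+\lambda\sum_{k=1}^K\alpha_k c(\beta_k)\Big),$$ where $\beta_0=0$. If $K^*$ and $\bm{\beta}^*\in\mathcal{P}_{K^*}$ attain this minimum, then the model $\beta^*_{K^*}$ is Pareto-optimal with respect to the two objectives $c(\cdot)$ and $\mathcal{L}_\alpha(\cdot)$ on $\mathbb{R}^d$, i.e. there is no $\beta\in\mathbb{R}^d$ with $c(\beta)\le c(\beta^*_{K^*})$ and $\mathcal{L}_\alpha(\beta)\le\mathcal{L}_\alpha(\beta^*_{K^*})$ with at least one inequality strict.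
   Context: For $\beta\in\mathbb{R}^d$, let $\mathcal{S}(\beta)=\{\theta\in\mathbb{R}^d:\|\beta-\theta\|_0\le 1\}$. A coordinate path of length $K\ge 0$ is a sequence $\bm{\beta}=(\beta_1,\dots,\beta_K)$ with $\beta_k\in\mathcal{S}(\beta_{k-1})$ for $1\le k\le K$, where $\beta_0=0$. $\mathcal{P}_K$ is the set of coordinate paths of length $K$, $\mathcal{P}=\bigcup_{K\ge 0}\mathcal{P}_K$, and for a model $\beta$, $\mathcal{P}(\beta)$ is the set of paths whose last model is $\beta$ (for $\beta=0$ including the empty path). The path loss is $\mathcal{L}_\alpha(\bm{\beta})=\sum_{k=1}^{|\bm{\beta}|}\alpha_k c(\beta_k)$ (zero for the empty path), and the model loss is $\mathcal{L}_\alpha(\beta)=\min_{\bm{\beta}\in\mathcal{P}(\beta)}\mathcal{L}_\alpha(\bm{\beta})$. *)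

(* Defs.v *)
From HB Require Import structures.
From mathcomp Require Import all_boot all_order all_algebra.
From mathcomp Require Import boolp classical_sets reals constructive_ereal ereal.
Set Implicit Arguments. Unset Strict Implicit. Unset Printing Implicit Defensive.
Import Order.TTheory GRing.Theory Num.Theory.
Local Open Scope ring_scope.
Local Open Scope classical_set_scope.

Section CoordPaths.
Variables (R : realType) (d : nat).

Definition l0_dist (beta theta : 'rV[R]_d) : nat :=
  #|[pred i : 'I_d | beta ord0 i != theta ord0 i]|.

Definition coord_step (beta theta : 'rV[R]_d) : bool := (l0_dist beta theta <= 1)%N.

(* A coordinate path (beta_1, ..., beta_K) is a sequence with beta_k in S(beta_{k-1}),
   beta_0 = 0.  Its length is [size s]. *)
Definition is_coord_path (s : seq 'rV[R]_d) : bool := path coord_step 0 s.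

Definition coord_paths_of_length (K : nat) : set (seq 'rV[R]_d) :=
  [set s | is_coord_path s /\ size s = K].

(* Last model of a path; for the empty path it is beta_0 = 0. *)
Definition last_model (s : seq 'rV[R]_d) : 'rV[R]_d := last 0 s.

(* P(beta): paths whose last model is beta (the empty path belongs to P(0)). *)
Definition coord_paths_to (beta : 'rV[R]_d) : set (seq 'rV[R]_d) :=
  [set s | is_coord_path s /\ last_model s = beta].

(* path loss  L_alpha(bbeta) = sum_{k=1}^{|bbeta|} alpha_k c(beta_k)  (0 for empty path);
   alpha is indexed from 1: alpha k is alpha_k. *)
Definition path_loss (alpha : nat -> R) (c : 'rV[R]_d -> R) (s : seq 'rV[R]_d) : R :=
  \sum_(k < size s) alpha k.+1 * c (nth 0 s k).

(* model loss L_alpha(beta) = min over P(beta) of the path loss; taken as the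
   infimum in the extended reals (it coincides with the minimum whenever attained). *)
Definition model_loss (alpha : nat -> R) (c : 'rV[R]_d -> R) (beta : 'rV[R]_d) : \bar R :=
  ereal_inf [set (path_loss alpha c s)%:E | s in coord_paths_to beta].

Definition objective (alpha : nat -> R) (c : 'rV[R]_d -> R) (lambda : R)
  (s : seq 'rV[R]_d) : R :=
  c (last_model s) + lambda * path_loss alpha c s.

End CoordPaths.

(* Main.v *)
Require Import Defs.
From HB Require Import structures.
From mathcomp Require Import all_boot all_order all_algebra.
From mathcomp Require Import lra.
From mathcomp Require Import boolp classical_sets reals constructive_ereal ereal.
Import Order.TTheory GRing.Theory Num.Theory.
Local Open Scope ring_scope.
Local Open Scope classical_set_scope.

Theorem proposition1 (R : realType) (d : nat) (c : 'rV[R]_d -> R)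
  (alpha : nat -> R) (lambda : R)
  (c_ge0 : forall beta, 0 <= c beta) (lambda_gt0 : 0 < lambda)
  (Kstar : nat) (bstar : seq 'rV[R]_d)
  (bstar_path : coord_paths_of_length Kstar bstar)
  (bstar_opt : forall (K : nat) (b : seq 'rV[R]_d),
      coord_paths_of_length K b ->
      objective alpha c lambda bstar <= objective alpha c lambda b) :
  ~ exists beta : 'rV[R]_d,
      [/\ c beta <= c (last_model bstar),
          (model_loss alpha c beta <= model_loss alpha c (last_model bstar))%E &
          c beta < c (last_model bstar) \/
          (model_loss alpha c beta < model_loss alpha c (last_model bstar))%E].
Proof.
case: bstar_path => Hp HK.
set L := path_loss alpha c bstar.
set bl := last_model bstar.
have lam0 : lambda != 0 by rewrite gt_eqF.
have key : forall s, is_coord_path s ->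
    c bl + lambda * L <= c (last_model s) + lambda * path_loss alpha c s.
  by move=> s Hs; by apply: (bstar_opt (size s)).
have HmL : model_loss alpha c bl = L%:E.
  apply/eqP; rewrite eq_le; apply/andP; split.
    by apply: ereal_inf_lbound; exists bstar.
  apply/ereal_infP => y [s [Hs Hl] <-]; rewrite lee_fin.
  have := key s Hs; rewrite Hl -/bl => H.
  have : lambda * L <= lambda * path_loss alpha c s by lra.
  by rewrite ler_pM2l.
move=> [beta [Hc Hm Hor]].
set M := (c bl - c beta) / lambda.
have hM : lambda * M = c bl - c beta by rewrite /M mulrC divfK.
have Hlb : ((L + M)%:E <= model_loss alpha c beta)%E.
  apply/ereal_infP => y [s [Hs Hl] <-]; rewrite lee_fin.
  have := key s Hs; rewrite Hl => H.
  rewrite -(ler_pM2l lambda_gt0) mulrDr hM; lra.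
rewrite HmL in Hm Hor.
have Hle := le_trans Hlb Hm; rewrite lee_fin in Hle.
case: Hor => [Hlt|Hlt].
  have : 0 < M by rewrite /M divr_gt0 // subr_gt0.
  lra.
have := le_lt_trans Hlb Hlt; rewrite lte_fin => H2.
have : 0 <= M by rewrite /M divr_ge0 // ?subr_ge0 // ltW.
lra.
Qed.
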